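(* For every centric $s$-vector $s$ and centric $y$-vector $y$, $$W_s=\mathrm{aff}(W_s)\cap W\qquad\text{and}\qquad W_y=\mathrm{aff}(W_y)\cap W,$$ where $\mathrm{aff}$ denotes affine hull.
   Context: Let $A\in\mathbb R^{m\times n}$ have full column rank $n\le m$ and $b\in\mathbb R^m$ be such that $\{x:Ax\le b\}$ is bounded with nonempty interior. For $w\in\mathbb R^m_{++}$ the weighted center of $w$ is the unique $(x,y,s)$ with $Ax+s=b$, $s>0$, $A^\top y=0$, $\mathrm{Diag}(s)y=w$ ($s$-vector $s$, $y$-vector $y$). $W=\{w\in\mathbb R^m:w>0,\ e^\top w=1\}$. Centric $s$-/$y$-vectors are the $s$-/$y$-vectors of weighted centers of elements of $W$. For centric $s$, $W_s=\{w\in W:$ $s$-vector of $w$ is $s\}$; for centric $y$, $W_y=\{w\in W:$ $y$-vector of $w$ is $y\}$. *)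

(* Defs.v *)
(* the statement is purely algebraic/order-theoretic, so it is
   stated over an arbitrary real field R (which includes the real numbers). *)
From HB Require Import structures.
From mathcomp Require Import all_boot all_order all_algebra.
Set Implicit Arguments. Unset Strict Implicit. Unset Printing Implicit Defensive.
Import Order.TTheory GRing.Theory Num.Theory.
Local Open Scope ring_scope.

Section Defs.
Variable R : realFieldType.

Definition poly_bounded m n (A : 'M[R]_(m, n)) (b : 'cV[R]_m) : Prop :=
  exists M : R, forall x : 'cV[R]_n,
    (forall i, (A *m x) i 0 <= b i 0) -> forall j, `|x j 0| <= M.

Definition poly_nonempty_interior m n (A : 'M[R]_(m, n)) (b : 'cV[R]_m) : Prop :=
  exists (x0 : 'cV[R]_n) (eps : R), 0 < eps /\
    forall z : 'cV[R]_n, (forall j, `|z j 0 - x0 j 0| <= eps) ->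
      forall i, (A *m z) i 0 <= b i 0.

Definition weighted_center m n (A : 'M[R]_(m, n)) (b : 'cV[R]_m)
    (w : 'cV[R]_m) (x : 'cV[R]_n) (y s : 'cV[R]_m) : Prop :=
  A *m x + s = b /\ (forall i, 0 < s i 0) /\ A^T *m y = 0 /\
  (forall i, s i 0 * y i 0 = w i 0).

Definition inW m (w : 'cV[R]_m) : Prop :=
  (forall i, 0 < w i 0) /\ \sum_(i < m) w i 0 = 1.

Definition svec_of m n (A : 'M[R]_(m, n)) b (w s : 'cV[R]_m) : Prop :=
  exists x y, weighted_center A b w x y s.
Definition yvec_of m n (A : 'M[R]_(m, n)) b (w y : 'cV[R]_m) : Prop :=
  exists x s, weighted_center A b w x y s.

Definition centric_s m n (A : 'M[R]_(m, n)) b (s : 'cV[R]_m) : Prop :=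
  exists w, inW w /\ svec_of A b w s.
Definition centric_y m n (A : 'M[R]_(m, n)) b (y : 'cV[R]_m) : Prop :=
  exists w, inW w /\ yvec_of A b w y.

Definition W_s m n (A : 'M[R]_(m, n)) b (s : 'cV[R]_m) : 'cV[R]_m -> Prop :=
  fun w => inW w /\ svec_of A b w s.
Definition W_y m n (A : 'M[R]_(m, n)) b (y : 'cV[R]_m) : 'cV[R]_m -> Prop :=
  fun w => inW w /\ yvec_of A b w y.

Definition aff m (S : 'cV[R]_m -> Prop) : 'cV[R]_m -> Prop :=
  fun v => exists (k : nat) (p : 'I_k -> 'cV[R]_m) (c : 'I_k -> R),
    (forall i, S (p i)) /\ \sum_(i < k) c i = 1 /\ v = \sum_(i < k) c i *: p i.

End Defs.

(* Main.v *)
Require Import Defs.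
From HB Require Import structures.
From mathcomp Require Import all_boot all_order all_algebra.
From Stdlib Require Import ClassicalEpsilon.
Import Order.TTheory GRing.Theory Num.Theory.
Local Open Scope ring_scope.

Lemma sum_entry (R : realFieldType) m k (c : 'I_k -> R) (p : 'I_k -> 'cV[R]_m) j :
  (\sum_(i < k) c i *: p i) j 0 = \sum_(i < k) c i * p i j 0.
Proof. rewrite summxE; apply: eq_bigr => i _; by rewrite mxE. Qed.

Lemma mul_sum (R : realFieldType) m n k (A : 'M[R]_(m, n)) (c : 'I_k -> R) (x : 'I_k -> 'cV[R]_n) :
  A *m (\sum_(i < k) c i *: x i) = \sum_(i < k) c i *: (A *m x i).
Proof. rewrite mulmx_sumr; apply: eq_bigr => i _; by rewrite scalemxAr. Qed.

Theorem lemmaA4 (R : realFieldType) (m n : nat) (A : 'M[R]_(m, n)) (b : 'cV[R]_m)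
  (hnm : (n <= m)%N) (hrank : \rank A = n)
  (hbd : poly_bounded A b) (hint : poly_nonempty_interior A b) :
  (forall s : 'cV[R]_m, centric_s A b s ->
     forall w : 'cV[R]_m, W_s A b s w <-> (aff (W_s A b s) w /\ inW w)) /\
  (forall y : 'cV[R]_m, centric_y A b y ->
     forall w : 'cV[R]_m, W_y A b y w <-> (aff (W_y A b y) w /\ inW w)).
Proof.
split.
- move=> s _ w; split.
    move=> H; split; last by case: H.
    exists 1%N, (fun _ => w), (fun _ => 1); split; first by [].
    by rewrite big_ord1 scale1r big_ord1.
  move=> [[k [p [c [Hp [Hc Hw]]]]] Hinw]; split; first by [].
  case: k p c Hp Hc Hw => [|k] p c Hp Hc Hw.
    by move: Hc; rewrite big_ord0 => /eqP; rewrite eq_sym oner_eq0.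
  have Hex : forall i, {xy : 'cV[R]_n * 'cV[R]_m |
      weighted_center A b (p i) xy.1 xy.2 s}.
    move=> i; apply: constructive_indefinite_description.
    case: (Hp i) => _ [x [y H]]; by exists (x, y).
  pose x := fun i => (sval (Hex i)).1.
  pose y := fun i => (sval (Hex i)).2.
  have Hwc : forall i, weighted_center A b (p i) (x i) (y i) s.
    move=> i; exact: (svalP (Hex i)).
  exists (x ord0), (\sum_(i < k.+1) c i *: y i).
  case: (Hwc ord0) => [H1 [H2 _]].
  split; first by []. split; first by [].
  split.
    rewrite mul_sum big1 // => i _.
    by case: (Hwc i) => [_ [_ [-> _]]]; rewrite scaler0.
  move=> j; rewrite Hw !sum_entry mulr_sumr; apply: eq_bigr => i _.
  case: (Hwc i) => [_ [_ [_ H4]]].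
  by rewrite -H4 mulrCA.
- move=> y _ w; split.
    move=> H; split; last by case: H.
    exists 1%N, (fun _ => w), (fun _ => 1); split; first by [].
    by rewrite big_ord1 scale1r big_ord1.
  move=> [[k [p [c [Hp [Hc Hw]]]]] Hinw]; split; first by [].
  case: k p c Hp Hc Hw => [|k] p c Hp Hc Hw.
    by move: Hc; rewrite big_ord0 => /eqP; rewrite eq_sym oner_eq0.
  have Hex : forall i, {xs : 'cV[R]_n * 'cV[R]_m |
      weighted_center A b (p i) xs.1 y xs.2}.
    move=> i; apply: constructive_indefinite_description.
    case: (Hp i) => _ [x [s H]]; by exists (x, s).
  pose x := fun i => (sval (Hex i)).1.
  pose s := fun i => (sval (Hex i)).2.
  have Hwc : forall i, weighted_center A b (p i) (x i) y (s i).
    move=> i; exact: (svalP (Hex i)).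
  have Hmul : forall j, (\sum_(i < k.+1) c i *: s i) j 0 * y j 0 = w j 0.
    move=> j; rewrite Hw !sum_entry mulr_suml; apply: eq_bigr => i _.
    case: (Hwc i) => [_ [_ [_ H4]]].
    by rewrite -H4 mulrA.
  have Hy : forall j, 0 < y j 0.
    move=> j; case: (Hwc ord0) => [_ [H2 [_ H4]]].
    case: (Hp ord0) => [[Hpos _] _].
    have := Hpos j; rewrite -H4 pmulr_rgt0 //.
  exists (\sum_(i < k.+1) c i *: x i), (\sum_(i < k.+1) c i *: s i).
  split.
    rewrite mul_sum -big_split /=.
    rewrite (eq_bigr (fun i => c i *: b)); last first.
      move=> i _; case: (Hwc i) => [H1 _]; by rewrite -scalerDr H1.
    by rewrite -scaler_suml Hc scale1r.
  split.
    move=> j; case: Hinw => [Hpos _]; have := Hpos j.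
    by rewrite -Hmul pmulr_lgt0.
  split; first by case: (Hwc ord0) => [_ [_ [H3 _]]].
  exact: Hmul.
Qed.
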